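(* Let $f,g$ be complex-valued functions of two variables with $f\perp g$ and $g(x,y)=-g(y,x)$ for all $x,y$. Let $\{a_i\}_{i\in\mathbb{Z}},\{b_i\}_{i\in\mathbb{Z}}$ be sequences and $m\ge0$, $n\ge1$ integers such that all quantities $f(a_j,b_m)$, $g(b_j,b_m)$ ($j\ne m$), $f(a_j,b_{-n})$ and $g(b_j,b_{-n})$ ($j\neq -n$) with $-n\le j\le m$ are nonzero. Then $$\sum_{k=-n}^{m}f(a_k,b_k)\frac{\prod_{j=m}^{k-1}g(b_j,b_m)}{\prod_{j=m}^{k}f(a_j,b_m)}\frac{\prod_{j=1}^{k-1}f(a_j,b_{-n})}{\prod_{j=1}^{k}g(b_j,b_{-n})}=0.$$
   Context: $f\perp g$ means $g(u,v)f(z,w)-g(u,w)f(z,v)+g(v,w)f(z,u)=0$ for all $u,v,w,z$. Products over integer ranges follow the convention: $\prod_{j=k}^{m}A_j=A_k\cdots A_m$ if $m\ge k$; $=1$ if $m=k-1$; $=(A_{m+1}\cdots A_{k-1})^{-1}$ if $m\le k-2$. *)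

(* Defs.v *)
From HB Require Import structures.
From mathcomp Require Import all_boot all_order all_algebra.
From mathcomp Require Import complex.
From mathcomp Require Import reals.
Set Implicit Arguments. Unset Strict Implicit. Unset Printing Implicit Defensive.
Import Order.TTheory GRing.Theory Num.Theory.
Local Open Scope ring_scope.

Definition perp (T : Type) (F : pzRingType) (f g : T -> T -> F) : Prop :=
  forall u v w z : T,
    g u v * f z w - g u w * f z v + g v w * f z u = 0.

(* Product over an integer range with the paper's convention:
   prodZ A k m = A k * ... * A m        if m >= k,
               = 1                      if m = k - 1,
               = (A (m+1) * ... * A (k-1))^-1  if m <= k - 2. *)
Definition prodZ (F : unitRingType) (A : int -> F) (k m : int) : F :=
  let len := m - k + 1 in
  if (0 <= len)%R then \prod_(i < absz len) A (k + i%:Z)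
  else (\prod_(i < absz len) A (m + 1 + i%:Z))^-1.

Definition sumZ (F : pzRingType) (A : int -> F) (lo hi : int) : F :=
  \sum_(i < absz (hi - lo + 1) | (0 <= hi - lo + 1)%R) A (lo + i%:Z).

(* Main.v *)
Require Import Defs.
From HB Require Import structures.
From mathcomp Require Import all_boot all_order all_algebra.
From mathcomp Require Import complex.
From mathcomp Require Import reals.
From mathcomp Require Import zify ring.
Import Order.TTheory GRing.Theory Num.Theory.
Local Open Scope ring_scope.

Lemma prodZS (F : fieldType) (A : int -> F) (k j : int) :
  A j != 0 -> prodZ A k j = prodZ A k (j - 1) * A j.
Proof.
move=> Aj; rewrite /prodZ.
have -> : j - k + 1 = (j - 1 - k + 1) + 1 by ring.
have hj : j = k + (j - 1 - k + 1) by ring.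
move: (j - 1 - k + 1) hj => l hj.
have hj1 : j - 1 = k + l - 1 by rewrite hj.
case: l hj hj1 => p hj hj1.
- have -> : Posz p + 1 = Posz p.+1 by lia.
  rewrite /= big_ord_recr /=; congr (_ * A _); lia.
- case: p hj hj1 => [|p] hj hj1.
  + have -> : Negz 0 + 1 = 0 by [].
    rewrite /= big_ord0 big_ord1.
    rewrite (_ : j - 1 + 1 + _ = j); last by rewrite /= addr0 subrK.
    by rewrite mulVf.
  + have -> : Negz p.+1 + 1 = Negz p by lia.
    rewrite /= [in RHS]big_ord_recl /= invfM.
    rewrite (_ : j - 1 + 1 + _ = j); last by rewrite /= addr0 subrK.
    rewrite mulrC mulrA mulfV // mul1r; congr (_^-1); apply: eq_bigr => i _; congr A.
    rewrite /bump /=; lia.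
Qed.

Theorem theorem4p1 (R : realType) (T : Type) (f g : T -> T -> R[i])
  (a b : int -> T) (m n : nat) :
  perp f g ->
  (forall x y : T, g x y = - g y x) ->
  (1 <= n)%N ->
  (forall j : int, - (n%:Z) <= j <= m%:Z ->
     [/\ f (a j) (b m%:Z) != 0,
         j != m%:Z -> g (b j) (b m%:Z) != 0,
         f (a j) (b (- (n%:Z))) != 0
       & j != - (n%:Z) -> g (b j) (b (- (n%:Z))) != 0]) ->
  sumZ (fun k : int =>
          f (a k) (b k)
          * (prodZ (fun j => g (b j) (b m%:Z)) m%:Z (k - 1)
             / prodZ (fun j => f (a j) (b m%:Z)) m%:Z k)
          * (prodZ (fun j => f (a j) (b (- (n%:Z)))) 1 (k - 1)
             / prodZ (fun j => g (b j) (b (- (n%:Z)))) 1 k))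
       (- (n%:Z)) m%:Z = 0.
Proof.
move=> hp hg n1 hnz.
have g0 : forall x, g x x = 0.
  move=> x; have := hg x x => /eqP; rewrite -subr_eq0 opprK -mulr2n mulrn_eq0 /=.
  by move/eqP.
pose G j := g (b j) (b m%:Z); pose F j := f (a j) (b m%:Z).
pose F' j := f (a j) (b (- (n%:Z))); pose G' j := g (b j) (b (- (n%:Z))).
pose U k := prodZ G m%:Z (k - 1) / prodZ F m%:Z k.
pose V k := prodZ F' 1 (k - 1) / prodZ G' 1 k.
pose W k := U k * G k * (V k * F' k).
pose cd := g (b m%:Z) (b (- (n%:Z))).
have cd0 : cd != 0.
  have [_ _ _ h] := hnz m%:Z (ltac:(apply/andP; split; lia)).
  by apply: h; lia.
pose N := (m + n + 1)%N.
rewrite /sumZ (_ : m%:Z - - n%:Z + 1 = N%:Z); last by rewrite /N; lia.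
rewrite (_ : (0 <= N%:Z) = true) //=.
pose hh (i : nat) := if i is i'.+1 then - W (- n%:Z + i'%:Z) else 0.
apply: (mulIf cd0); rewrite mul0r mulr_suml.
rewrite (eq_bigr (fun i : 'I_N => hh (i : nat).+1 - hh i)); last first.
  move=> [i /= hi] _.
  set k := - n%:Z + i%:Z.
  have hk : - n%:Z <= k <= m%:Z by apply/andP; split; rewrite /k /N in hi *; lia.
  have [Fk Gk F'k G'k] := hnz k hk.
  have e : f (a k) (b k) * cd = G' k * F k - G k * F' k.
    have := hp (b k) (b m%:Z) (b (- n%:Z)) (a k).
    rewrite /G' /F /G /F' /cd => h; apply/eqP; rewrite -subr_eq0 -h; apply/eqP; ring.
  change (f (a k) (b k) * U k * V k * cd = hh i.+1 - hh i).
  transitivity ((f (a k) (b k) * cd) * U k * V k); first by ring.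
  rewrite e.
  transitivity ((U k * F k) * (V k * G' k) - W k); first by rewrite /W; ring.
  rewrite /hh -/k [RHS]addrC; congr (_ + _).
  case: i hi @k hk Fk Gk F'k G'k e => [|i'] hi k hk Fk Gk F'k G'k e.
    rewrite /G' (_ : k = - n%:Z); last by rewrite /k addr0.
    by rewrite g0 !mulr0 oppr0.
  have hk1 : k - 1 = - n%:Z + i'%:Z by rewrite /k; lia.
  have hk1b : - n%:Z <= k - 1 <= m%:Z by apply/andP; split; rewrite /N in hi; lia.
  have [Fk1 Gk1 F'k1 G'k1] := hnz (k - 1) hk1b.
  have UF : U k * F k = U (k - 1) * G (k - 1).
    rewrite /U (prodZS _ F m%:Z k Fk) (prodZS _ G m%:Z (k - 1)); last first.
      by apply: Gk1; rewrite /N in hi; lia.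
    rewrite invfM mulrA mulfVK //; exact: mulrAC.
  have VG : V k * G' k = V (k - 1) * F' (k - 1).
    have G'k' : G' k != 0 by apply: G'k; rewrite /k; lia.
    rewrite /V (prodZS _ G' 1 k G'k') (prodZS _ F' 1 (k - 1) F'k1).
    rewrite invfM mulrA mulfVK //; exact: mulrAC.
  by rewrite UF VG /W -hk1 opprK.
rewrite -(big_mkord xpredT (fun i => hh i.+1 - hh i)) telescope_sumr //.
rewrite /hh /N addn1 (_ : - n%:Z + (m + n)%N%:Z = m%:Z); last by lia.
by rewrite /W /G g0 !mulr0 mul0r oppr0 addr0.
Qed.
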